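(* Let $f$ be a convergent power series in $\mathbf z=(z_1,\dots,z_n)$ with $f(\mathbf 0)=0$ and let $f_i=\partial f/\partial z_i$. (1) If $P\sim_J Q$ then $P\sim Q$. Conversely, if $P\sim Q$ and the face function $f_P$ contains all $n$ variables $z_1,\dots,z_n$, then $P\sim_J Q$. (2) A strictly positive weight vector $P$ is a vertex of $\Gamma^*(f)$ if and only if $\dim\Delta(P,f)=n-1$, and it is a vertex of $\Gamma_J^*(f)$ if and only if $\dim\big(\Delta(P,f)+\sum_{i=1}^n\Delta(P,f_i)\big)=n-1$, where the sum is the Minkowski sum.
   Context: For a convergent power series $g=\sum c_\nu\mathbf z^\nu$, the Newton diagram $\Gamma_+(g)$ is the convex hull of $\bigcup_{c_\nu\ne0}(\nu+\mathbb R_{\ge0}^n)$. For a weight vector $P=(p_1,\dots,p_n)\in\mathbb R_{\ge0}^n$, $d(P,g)=\min\{\sum_ip_i\nu_i:\nu\in\Gamma_+(g)\}$, $\Delta(P,g)$ is the face of $\Gamma_+(g)$ where this minimum is attained, and $g_P=\sum_{\nu\in\Delta(P,g)}c_\nu\mathbf z^\nu$. $P$ is strictly positive if all $p_i>0$. Two weight vectors are equivalent, $P\sim Q$, if $\Delta(P,f)=\Delta(Q,f)$; the equivalence classes give a rational polyhedral cone subdivision $\Gamma^*(f)$ of $\mathbb R_{\ge0}^n$ (the dual Newton diagram). They are Jacobian equivalent, $P\sim_JQ$, if $\Delta(P,f)=\Delta(Q,f)$ and $\Delta(P,f_i)=\Delta(Q,f_i)$ for all $i=1,\dots,n$; the classes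 give a finer cone subdivision $\Gamma_J^*(f)$. A vertex of a subdivision is a non-zero weight vector spanning a one-dimensional cone of it. *)

(* Defs.v *)
From HB Require Import structures.
From mathcomp Require Import all_boot all_order all_algebra.
From mathcomp Require Import boolp reals.
Set Implicit Arguments. Unset Strict Implicit. Unset Printing Implicit Defensive.
Import Order.TTheory GRing.Theory Num.Theory.
Local Open Scope ring_scope.

Section Defs.
Variable R : realType.
Variable C : numClosedFieldType.
Variable n : nat.

Definition expo := {ffun 'I_n -> nat}.
Definition pser := expo -> C.        (* g = sum_nu g(nu) z^nu *)
Definition vset := 'rV[R]_n -> Prop.

Definition tdeg (nu : expo) : nat := \sum_(i < n) nu i.

(* convergence of a power series near 0 (Cauchy/Abel estimate):
   there is r > 0 with |c_nu| r^|nu| bounded. *)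
Definition convergent (g : pser) : Prop :=
  exists r : C, 0 < r /\ exists M : C, forall nu, `|g nu| * r ^+ tdeg nu <= M.

Definition zero_expo : expo := [ffun _ => 0%N].

Definition incr (nu : expo) (i : 'I_n) : expo := [ffun j => (nu j + (j == i))%N].

Definition pderiv (g : pser) (i : 'I_n) : pser :=
  fun nu => (nu i).+1%:R * g (incr nu i).

Definition pt (nu : expo) : 'rV[R]_n := \row_j (nu j)%:R.

Definition wdot (P x : 'rV[R]_n) : R := \sum_(j < n) P 0 j * x 0 j.

Definition conv_hull (A : vset) : vset := fun x =>
  exists m (p : 'I_m -> 'rV[R]_n) (w : 'I_m -> R),
    (forall k, A (p k)) /\ (forall k, 0 <= w k) /\ \sum_(k < m) w k = 1 /\
    x = \sum_(k < m) w k *: p k.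

Definition newton (g : pser) : vset :=
  conv_hull (fun x => exists nu, g nu != 0 /\ forall j, (pt nu) 0 j <= x 0 j).

Definition Delta (P : 'rV[R]_n) (g : pser) : vset := fun x =>
  newton g x /\ forall y, newton g y -> wdot P x <= wdot P y.

Definition face_fun (P : 'rV[R]_n) (g : pser) : pser :=
  fun nu => if `[< Delta P g (pt nu) >] then g nu else 0.

Definition contains_var (g : pser) (i : 'I_n) : Prop :=
  exists nu, g nu != 0 /\ (0 < nu i)%N.

Definition weight (P : 'rV[R]_n) : Prop := forall j, 0 <= P 0 j.
Definition strictly_pos (P : 'rV[R]_n) : Prop := forall j, 0 < P 0 j.

Definition wequiv (f : pser) (P Q : 'rV[R]_n) : Prop := Delta P f = Delta Q f.

Definition jequiv (f : pser) (P Q : 'rV[R]_n) : Prop :=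
  Delta P f = Delta Q f /\ forall i, Delta P (pderiv f i) = Delta Q (pderiv f i).

(* P is a vertex of the cone subdivision given by the classes of the
   equivalence relation eqv on R_{>=0}^n: P <> 0 and the cone of the
   subdivision containing P (its class) is the ray spanned by P. *)
Definition is_vertex (eqv : 'rV[R]_n -> 'rV[R]_n -> Prop) (P : 'rV[R]_n) : Prop :=
  P != 0 /\
  (fun Q => weight Q /\ eqv P Q) = (fun Q => exists t : R, 0 < t /\ Q = t *: P).

Definition msum (A B : vset) : vset := fun x =>
  exists a b, A a /\ B b /\ x = a + b.

Definition jac_face_sum (P : 'rV[R]_n) (f : pser) : vset :=
  foldr (fun i S => msum S (Delta P (pderiv f i))) (Delta P f) (enum 'I_n).

Definition aff_indep_in (S : vset) (k : nat) : Prop :=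
  exists p : 'I_k.+1 -> 'rV[R]_n, (forall l, S (p l)) /\
    row_free (\matrix_(l < k) (p (lift ord0 l) - p ord0)).

Definition has_dim (S : vset) (k : nat) : Prop :=
  aff_indep_in S k /\ ~ aff_indep_in S k.+1.

End Defs.

(* Main.v *)
Require Import Defs.
From HB Require Import structures.
From mathcomp Require Import all_boot all_order all_algebra.
From mathcomp Require Import boolp reals ring lra.
Import Order.TTheory GRing.Theory Num.Theory.
Local Open Scope ring_scope.
Set Implicit Arguments. Unset Strict Implicit. Unset Printing Implicit Defensive.

Section Basics.
Variable R : realType.
Variable C : numClosedFieldType.
Variable n : nat.
Local Notation vec := ('rV[R]_n).
Local Notation pser := (pser C n).
Implicit Types (P Q v x y r : vec) (g : pser).

Lemma wdotDr P x y : wdot P (x + y) = wdot P x + wdot P y.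
Proof. by rewrite /wdot -big_split; apply: eq_bigr => j _; rewrite !mxE mulrDr. Qed.
Lemma wdot0r P : wdot P 0 = 0.
Proof. by rewrite /wdot big1 // => j _; rewrite mxE mulr0. Qed.
Lemma wdotZr P a x : wdot P (a *: x) = a * wdot P x.
Proof. by rewrite /wdot mulr_sumr; apply: eq_bigr => j _; rewrite !mxE mulrCA. Qed.
Lemma wdotNr P x : wdot P (- x) = - wdot P x.
Proof. by rewrite -scaleN1r wdotZr mulN1r. Qed.
Lemma wdotBr P x y : wdot P (x - y) = wdot P x - wdot P y.
Proof. by rewrite wdotDr wdotNr. Qed.
Lemma wdotC P x : wdot P x = wdot x P.
Proof. by apply: eq_bigr => j _; rewrite mulrC. Qed.
Lemma wdotDl P Q x : wdot (P + Q) x = wdot P x + wdot Q x.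
Proof. by rewrite !(wdotC _ x) wdotDr. Qed.
Lemma wdotZl a P x : wdot (a *: P) x = a * wdot P x.
Proof. by rewrite !(wdotC _ x) wdotZr. Qed.
Lemma wdot0l x : wdot 0 x = 0.
Proof. by rewrite wdotC wdot0r. Qed.
Lemma wdot_sumr P m (w : 'I_m -> R) (p : 'I_m -> vec) :
  wdot P (\sum_(k < m) w k *: p k) = \sum_(k < m) w k * wdot P (p k).
Proof.
rewrite (big_morph (wdot P) (wdotDr P) (wdot0r P)).
by apply: eq_bigr => k _; rewrite wdotZr.
Qed.

Definition E (i : 'I_n) : vec := \row_j (j == i)%:R.
Lemma wdotE P i : wdot P (E i) = P 0 i.
Proof.
rewrite /wdot (bigD1 i) //= big1 ?addr0; first by rewrite mxE eqxx mulr1.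
by move=> j /negbTE ji; rewrite mxE ji mulr0.
Qed.
Lemma EwdotE i x : wdot (E i) x = x 0 i.
Proof. by rewrite wdotC wdotE. Qed.

Lemma wdot_ge0 P x : (forall j, 0 <= P 0 j) -> (forall j, 0 <= x 0 j) -> 0 <= wdot P x.
Proof. by move=> HP Hx; apply: sumr_ge0 => j _; apply: mulr_ge0. Qed.
Lemma wdot_le P x y : (forall j, 0 <= P 0 j) -> (forall j, x 0 j <= y 0 j) ->
  wdot P x <= wdot P y.
Proof. by move=> HP Hx; apply: ler_sum => j _; apply: ler_wpM2l. Qed.
Lemma wdot_term P x j : (forall j, 0 <= P 0 j) -> (forall j, 0 <= x 0 j) ->
  P 0 j * x 0 j <= wdot P x.
Proof.
move=> HP Hx; rewrite /wdot (bigD1 j) //= lerDl.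
by apply: sumr_ge0 => k _; apply: mulr_ge0.
Qed.

Definition pt' (nu : expo n) : vec := pt R nu.
Lemma pt_ge0 (nu : expo n) j : 0 <= (pt R nu) 0 j.
Proof. by rewrite mxE ler0n. Qed.
Lemma pt_incr (nu : expo n) i : pt R (incr nu i) = pt R nu + E i.
Proof. by apply/rowP => j; rewrite !mxE ffunE natrD. Qed.

Lemma conv_lin (A : vset R n) Q P' a b x :
  conv_hull A x ->
  (forall p, A p -> a <= wdot Q p /\ (b < wdot P' p -> a < wdot Q p)) ->
  a <= wdot Q x /\ (b < wdot P' x -> a < wdot Q x).
Proof.
case=> m [p [w [Ap [w0 [w1 ->]]]]] H.
rewrite !wdot_sumr.
have ea : a = \sum_(k < m) w k * a by rewrite -mulr_suml w1 mul1r.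
have eb : b = \sum_(k < m) w k * b by rewrite -mulr_suml w1 mul1r.
split.
  rewrite ea; apply: ler_sum => k _; apply: ler_wpM2l => //.
  by case: (H _ (Ap k)).
move=> hb.
case: (pickP (fun k => (b < wdot P' (p k)) && (0 < w k))) => [k /andP [bk wk] | none].
  rewrite ea (bigD1 k) //= [X in _ < X](bigD1 k) //=.
  apply: ltr_leD.
    by rewrite ltr_pM2l //; case: (H _ (Ap k)) => _; apply.
  apply: ler_sum => j _; apply: ler_wpM2l => //.
  by case: (H _ (Ap j)).
exfalso; move: hb; apply/negP; rewrite -leNgt eb.
apply: ler_sum => k _.
move: (none k) => /negbT; rewrite negb_and -!leNgt => /orP [h|h].
  by apply: ler_wpM2l.
have -> : w k = 0 by apply/eqP; rewrite eq_le h w0.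
by rewrite !mul0r.
Qed.

Lemma conv_trans (A B : vset R n) r x :
  conv_hull A x -> (forall p, A p -> B (p + r)) -> conv_hull B (x + r).
Proof.
case=> m [p [w [Ap [w0 [w1 ->]]]]] H.
exists m, (fun k => p k + r), w; split; first by move=> k; apply: H.
split=> //; split=> //.
under [X in _ = X]eq_bigr => k _ do rewrite scalerDr.
by rewrite big_split /= -scaler_suml w1 scale1r.
Qed.

Definition gen g : vset R n := fun x =>
  exists nu, g nu != 0 /\ forall j, (pt R nu) 0 j <= x 0 j.

Lemma newton_gen g x : gen g x -> newton g x.
Proof.
move=> Hg; exists 1%N, (fun _ => x), (fun _ => 1); split=> //.
by rewrite !big_ord1 scale1r.
Qed.

Lemma newton_ptE g nu : g nu != 0 -> newton g (pt R nu).
Proof. by move=> h; apply: newton_gen; exists nu. Qed.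

Lemma newton_addr g x r : newton g x -> (forall j, 0 <= r 0 j) -> newton g (x + r).
Proof.
move=> Hx Hr; apply: conv_trans Hx _ => p [nu [gnu hp]].
exists nu; split=> // j; have := hp j; rewrite [X in X <= _]mxE => h.
rewrite !mxE; apply: (le_trans h); by rewrite lerDl.
Qed.

Lemma newton_ge0 g x j : newton g x -> 0 <= x 0 j.
Proof.
move=> Hx; have [] := conv_lin (Q := E j) (P' := E j) (a := 0) (b := 0) Hx.
  move=> p [nu [_ hp]]; rewrite EwdotE; split.
    by apply: le_trans (hp j); apply: pt_ge0.
  by [].
by rewrite EwdotE.
Qed.

Lemma newton_lower g Q a y :
  (forall p, gen g p -> a <= wdot Q p) -> newton g y -> a <= wdot Q y.
Proof.
move=> H Hy; have [] // := conv_lin (Q := Q) (P' := 0) (a := a) (b := 0) Hy.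
by move=> p gp; split; [apply: H | rewrite wdot0l ltxx].
Qed.

Lemma newton0 g x : (forall nu, g nu = 0) -> ~ newton g x.
Proof.
move=> g0 [[|m] [p [w [Ap [w0 [w1 _]]]]]].
  by move: w1; rewrite big_ord0 => /esym/eqP; rewrite oner_eq0.
by case: (Ap ord0) => nu [/eqP []]; rewrite g0.
Qed.

Lemma Delta_const P g x y : Delta P g x -> Delta P g y -> wdot P x = wdot P y.
Proof. by case=> nx hx [ny hy]; apply/eqP; rewrite eq_le hx // hy. Qed.

Lemma Delta_scale t P g : 0 < t -> Delta (t *: P) g = Delta P g.
Proof.
move=> t0; apply: funext => x; apply: propext; rewrite /Delta.
split=> [[nx h]|[nx h]]; split=> // y ny; move: (h y ny);
  by rewrite !wdotZl ler_pM2l.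
Qed.

Lemma Delta0f P g x : (forall nu, g nu = 0) -> ~ Delta P g x.
Proof. by move=> g0 [nx _]; apply: (newton0 g0 nx). Qed.

End Basics.

Section Finite.
Variable R : realType.
Variable C : numClosedFieldType.
Variable n : nat.
Local Notation vec := ('rV[R]_n).
Local Notation pser := (pser C n).
Implicit Types (P Q v x y r : vec) (g : pser).

Lemma sum_term (F : 'I_n -> R) j : (forall k, 0 <= F k) -> F j <= \sum_k F k.
Proof. by move=> h; rewrite (bigD1 j) //= lerDl; apply: sumr_ge0. Qed.

Lemma bounded_list P D : strictly_pos P ->
  exists L : seq (expo n), forall nu, wdot P (pt R nu) <= D -> nu \in L.
Proof.
move=> HP.
pose K := \sum_j `|D| / P 0 j.
have K0 : 0 <= K by apply: sumr_ge0 => j _; apply: divr_ge0 => //; apply: ltW.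
pose B := Num.bound K.
have HB : K < B%:R by apply: archi_boundP.
exists (map (fun t : {ffun 'I_n -> 'I_B.+1} => ([ffun j => nat_of_ord (t j)] : expo n)) (enum {ffun 'I_n -> 'I_B.+1})).
move=> nu hnu.
have hj : forall j, (nu j < B.+1)%N.
  move=> j.
  have h1 : P 0 j * (nu j)%:R <= D.
    apply: le_trans hnu.
    have := wdot_term (x := pt R nu) j (fun k => ltW (HP k)) (@pt_ge0 R n nu).
    by rewrite mxE.
  have h2 : (nu j)%:R <= `|D| / P 0 j.
    rewrite ler_pdivlMr // mulrC; apply: le_trans h1 _; apply: ler_norm.
  have h3 : `|D| / P 0 j <= K.
    apply: (sum_term (F := fun k => `|D| / P 0 k)) => k.
    by apply: divr_ge0 => //; apply: ltW.
  have : (nu j)%:R < B%:R :> R by apply: le_lt_trans HB; apply: le_trans h3.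
  by rewrite ltr_nat => /ltnW.
apply/mapP; exists [ffun j => inord (nu j)]; first by rewrite mem_enum.
by apply/ffunP => j; rewrite !ffunE inordK.
Qed.

Lemma seq_posmin (T : eqType) (s : seq T) (F : T -> R) :
  exists2 δ, 0 < δ & forall t, t \in s -> 0 < F t -> δ <= F t.
Proof.
elim: s => [|t s [δ δ0 Hδ]]; first by exists 1.
case: (ltrP 0 (F t)) => Ft.
  exists (Num.min δ (F t)); first by rewrite lt_min δ0 Ft.
  move=> u; rewrite inE => /orP [/eqP ->|us] Fu; rewrite ge_min ?lexx ?orbT //.
  by rewrite Hδ.
exists δ => // u; rewrite inE => /orP [/eqP ->|us] Fu; last by apply: Hδ.
by move: Fu; rewrite ltNge Ft.
Qed.

Lemma seq_argmin (T : eqType) (F : T -> R) (a : T) (s : seq T) :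
  exists2 t, t \in a :: s & forall u, u \in a :: s -> F t <= F u.
Proof.
elim: s a => [|b s IH] a.
  by exists a; rewrite ?mem_seq1 // => u; rewrite mem_seq1 => /eqP ->.
have [t ht Ht] := IH b.
case: (lerP (F a) (F t)) => h.
  exists a; first by rewrite mem_head.
  move=> u; rewrite inE => /orP [/eqP ->|us]; first by [].
  by apply: le_trans h (Ht u us).
exists t; first by rewrite inE ht orbT.
move=> u; rewrite inE => /orP [/eqP ->|us]; first by apply: ltW.
by apply: Ht.
Qed.

Lemma seq_argmin0 (T : eqType) (F : T -> R) (t0 : T) (s : seq T) : t0 \in s ->
  exists2 t, t \in s & forall u, u \in s -> F t <= F u.
Proof. by case: s => [|a s] //= _; apply: seq_argmin. Qed.

Lemma gap P d : strictly_pos P ->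
  exists2 δ, 0 < δ & forall nu, d < wdot P (pt R nu) -> d + δ <= wdot P (pt R nu).
Proof.
move=> HP.
have [L HL] := bounded_list (d + 1) HP.
have [δ δ0 Hδ] := seq_posmin L (fun nu => wdot P (pt R nu) - d).
exists (Num.min δ 1); first by rewrite lt_min δ0 ltr01.
move=> nu hnu.
have m1 : Num.min δ 1 <= δ by rewrite ge_min lexx.
have m2 : Num.min δ 1 <= 1 by rewrite ge_min lexx orbT.
case: (lerP (wdot P (pt R nu)) (d + 1)) => h.
  have := Hδ nu (HL nu h); rewrite subr_gt0 => /(_ hnu) hd.
  lra.
lra.
Qed.

Lemma Delta_nonempty P g nu0 : strictly_pos P -> g nu0 != 0 ->
  exists x0, Delta P g x0.
Proof.
move=> HP g0.
have [L HL] := bounded_list (wdot P (pt R nu0)) HP.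
pose L' := [seq nu <- L | g nu != 0].
have h0 : nu0 \in L' by rewrite mem_filter g0 HL.
have [nu1 h1 Hmin] := seq_argmin0 (fun nu => wdot P (pt R nu)) h0.
move: h1; rewrite mem_filter => /andP [g1 _].
exists (pt R nu1); split; first by apply: newton_ptE.
move=> y ny; apply: newton_lower ny => p [nu [gnu hp]].
have hw : wdot P (pt R nu) <= wdot P p by apply: wdot_le => // j; apply: ltW.
apply: le_trans hw.
case: (lerP (wdot P (pt R nu)) (wdot P (pt R nu0))) => h.
  by apply: Hmin; rewrite mem_filter gnu HL.
by apply: le_trans (Hmin _ h0) (ltW h).
Qed.

Lemma small_e P v θ : strictly_pos P -> 0 < θ ->
  exists2 e0, 0 < e0 & forall e, 0 < e -> e <= e0 -> forall j, `|e * v 0 j| <= θ * P 0 j.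
Proof.
move=> HP θ0.
pose K := \sum_j `|v 0 j| / P 0 j.
have K0 : 0 <= K by apply: sumr_ge0 => j _; apply: divr_ge0 => //; apply: ltW.
exists (θ / (1 + K)); first by apply: divr_gt0 => //; lra.
move=> e e0 ee j.
have hK : `|v 0 j| / P 0 j <= K.
  by apply: (sum_term (F := fun k => `|v 0 k| / P 0 k)) => k; apply: divr_ge0 => //; apply: ltW.
have hv : `|v 0 j| <= K * P 0 j by rewrite -ler_pdivrMr.
have he : e * (1 + K) <= θ by rewrite -ler_pdivlMr //; lra.
rewrite normrM gtr0_norm //.
have : e * `|v 0 j| <= e * (K * P 0 j) by apply: ler_wpM2l => //; apply: ltW.
have : e * (1 + K) * P 0 j <= θ * P 0 j by apply: ler_wpM2r => //; apply: ltW.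
have := HP j.
move=> *; have : 0 <= e * P 0 j by apply: mulr_ge0; apply: ltW.
lra.
Qed.

Lemma wdot_bound P (u : vec) y θ : (forall j, `|u 0 j| <= θ * P 0 j) -> (forall j, 0 <= y 0 j) ->
  `|wdot u y| <= θ * wdot P y.
Proof.
move=> hu hy; rewrite /wdot; apply: le_trans (ler_norm_sum _ _ _) _.
rewrite mulr_sumr; apply: ler_sum => j _.
rewrite normrM (ger0_norm (hy j)) mulrA; apply: ler_wpM2r => //.
Qed.

End Finite.

Section Key.
Variable R : realType.
Variable C : numClosedFieldType.
Variable n : nat.
Local Notation vec := ('rV[R]_n).
Local Notation pser := (pser C n).
Implicit Types (P Q v x y r : vec) (g : pser).

Lemma theta_ex (d δ : R) : 0 <= d -> 0 < δ ->
  exists θ : R, [/\ 0 < θ, θ <= 1/2 & θ * (2 * d + δ) <= δ / 2].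
Proof.
move=> d0 δ0.
have h : 0 < 2 * d + δ by lra.
exists (δ / (2 * (2 * d + δ))); split.
- by apply: divr_gt0 => //; lra.
- by rewrite ler_pdivrMr; lra.
- have hne : 2 * d + δ != 0 by rewrite gt_eqF.
  have -> : δ / (2 * (2 * d + δ)) * (2 * d + δ) = δ / 2 by field.
  by [].
Qed.

Lemma key P g v x0 : strictly_pos P -> Delta P g x0 ->
  (forall x, Delta P g x -> wdot v x = wdot v x0) ->
  exists2 e0, 0 < e0 & forall e, 0 < e -> e <= e0 -> Delta (P + e *: v) g = Delta P g.
Proof.
move=> HP Hx0 Hv.
pose d := wdot P x0.
have P0 : forall j, 0 <= P 0 j by move=> j; apply: ltW.
have d0 : 0 <= d by apply: wdot_ge0 => // j; apply: newton_ge0 (proj1 Hx0).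
have [δ δ0 Hgap] := gap d HP.
have [θ [θ0 θ1 θ2]] := theta_ex d0 δ0.
have [e0 e00 He0] := small_e v HP θ0.
exists e0 => // e e0' ee0.
have Hu : forall j, `|(e *: v) 0 j| <= θ * P 0 j by move=> j; rewrite mxE; apply: He0.
pose Q := P + e *: v.
have HQ : forall y, (forall j, 0 <= y 0 j) ->
    wdot P y - θ * wdot P y <= wdot Q y /\ wdot Q y <= wdot P y + θ * wdot P y.
  move=> y hy; have := wdot_bound Hu hy; rewrite ler_norml => /andP [h1 h2].
  by rewrite /Q wdotDl; lra.
have dmin : forall y, newton g y -> d <= wdot P y by move=> y; case: Hx0 => _; apply.
have HA : forall p, gen g p -> wdot Q x0 <= wdot Q p /\ (d < wdot P p -> wdot Q x0 < wdot Q p).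
  move=> p [nu [gnu hp]].
  pose r := p - pt R nu.
  have r0 : forall j, 0 <= r 0 j by move=> j; rewrite !mxE subr_ge0; have := hp j; rewrite mxE.
  have ep : p = pt R nu + r by rewrite /r addrC subrK.
  have [hr1 _] := HQ r r0.
  have wr0 : 0 <= wdot P r by apply: wdot_ge0.
  have hrh : wdot P r / 2 <= wdot P r - θ * wdot P r.
    have : θ * wdot P r <= 1/2 * wdot P r by apply: ler_wpM2r.
    lra.
  rewrite ep !(wdotDr _ (pt R nu) r).
  case: (lerP (wdot P (pt R nu)) d) => h.
    have Dnu : Delta P g (pt R nu).
      split; first by apply: newton_ptE.
      by move=> y ny; apply: le_trans h (dmin y ny).
    have e1 : wdot P (pt R nu) = d by apply: Delta_const Dnu Hx0.
    have e2 : wdot v (pt R nu) = wdot v x0 by apply: Hv.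
    have e3 : wdot Q (pt R nu) = wdot Q x0 by rewrite /Q !wdotDl !wdotZl e1 e2.
    split; lra.
  have hg := Hgap nu h.
  have [hn _] := HQ (pt R nu) (@pt_ge0 R n nu).
  have [_ hx] := HQ x0 (fun j => newton_ge0 j (proj1 Hx0)).
  have h3 : (1 - θ) * (d + δ) <= (1 - θ) * wdot P (pt R nu).
    by apply: ler_wpM2l => //; lra.
  have h4 : wdot Q x0 < wdot Q (pt R nu).
    have hx' : wdot Q x0 <= d + θ * d by exact: hx.
    have : wdot P (pt R nu) - θ * wdot P (pt R nu) = (1 - θ) * wdot P (pt R nu) by ring.
    have : (1 - θ) * (d + δ) = d + δ - θ * (2 * d + δ) + θ * d by ring.
    lra.
  split; lra.
have HN : forall y, newton g y -> wdot Q x0 <= wdot Q y /\ (d < wdot P y -> wdot Q x0 < wdot Q y).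
  by move=> y ny; apply: conv_lin ny HA.
apply: funext => y; apply: propext; split.
  case=> ny hy; split=> // z nz.
  case: (lerP (wdot P y) d) => h; first by apply: le_trans h (dmin z nz).
  have := (HN y ny).2 h; have := hy x0 (proj1 Hx0); lra.
move=> Dy; split; first by case: Dy.
move=> z nz.
have e1 : wdot P y = d by apply: Delta_const Dy Hx0.
have e2 : wdot v y = wdot v x0 by apply: Hv.
have -> : wdot Q y = wdot Q x0 by rewrite /Q !wdotDl !wdotZl e1 e2.
by case: (HN z nz).
Qed.

End Key.

Section LinAlg.
Variable R : realType.
Variable n : nat.
Local Notation vec := ('rV[R]_n).
Implicit Types (P Q v x y r : vec).

Definition constS Q (S : vset R n) := forall x y, S x -> S y -> wdot Q x = wdot Q y.

Definition affM k (p : 'I_k.+1 -> vec) : 'M[R]_(k, n) :=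
  \matrix_(l < k) (p (lift ord0 l) - p ord0).

Lemma wdot_mx v x : wdot v x = (v *m x^T) 0 0.
Proof. by rewrite /wdot !mxE; apply: eq_bigr => j _; rewrite !mxE. Qed.

Lemma kerM (S : vset R n) k (p : 'I_k.+1 -> vec) Q : (forall l, S (p l)) -> constS Q S ->
  Q *m (affM p)^T = 0.
Proof.
move=> Sp HQ; apply/matrixP => i l; rewrite (ord1 i).
transitivity (wdot Q (p (lift ord0 l) - p ord0)).
  by rewrite /wdot !mxE; apply: eq_bigr => j _; rewrite !mxE.
by rewrite wdotBr (HQ _ _ (Sp _) (Sp ord0)) subrr mxE.
Qed.

Lemma no_aff_n (S : vset R n) P : P != 0 -> constS P S -> ~ aff_indep_in S n.
Proof.
move=> P0 HP [p [Sp Mf]].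
have H0 := kerM Sp HP.
have Mu : (affM p)^T \in unitmx by rewrite unitmx_tr -row_free_unit.
have := mulmxK Mu P; rewrite /affM in H0 *; rewrite H0 mul0mx => eP.
by move: P0; rewrite -eP eqxx.
Qed.

Lemma ray_of_aff (S : vset R n) P Q : (0 < n)%N -> aff_indep_in S n.-1 -> P != 0 ->
  constS P S -> constS Q S -> exists t, Q = t *: P.
Proof.
move=> hn [p [Sp Mf]] P0 HP HQ.
pose K := kermx (affM p)^T.
have PK : (P <= K)%MS.
  rewrite /K sub_kermx; apply/eqP; exact: (kerM Sp HP).
have QK : (Q <= K)%MS by rewrite /K sub_kermx; apply/eqP; exact: (kerM Sp HQ).
have rK : \rank K = 1%N.
  rewrite mxrank_ker mxrank_tr.
  move: Mf; rewrite /row_free /affM => /eqP ->.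
  by rewrite -subn1 subKn.
have rP : \rank P = 1%N by rewrite rank_rV P0.
have := mxrank_leqif_eq PK; rewrite rP rK => -[_].
rewrite eqxx => /esym /andP [_ KP].
have /submxP [D ->] := submx_trans QK KP.
by exists (D 0 0); rewrite {1}(mx11_scalar D) mul_scalar_mx.
Qed.

Lemma aff_le_n (S : vset R n) k : aff_indep_in S k -> (k <= n)%N.
Proof. by case=> p [_ Mf]; have := rank_leq_col (affM p); rewrite /affM (eqP Mf). Qed.

Lemma aff0 (S : vset R n) s : S s -> aff_indep_in S 0.
Proof.
move=> Ss; exists (fun _ => s); split=> //.
by rewrite /row_free -leqn0 rank_leq_row.
Qed.

Lemma aff_ext (S : vset R n) k (p : 'I_k.+1 -> vec) x : (forall l, S (p l)) -> row_free (affM p) ->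
  S x -> ~~ (x - p ord0 <= affM p)%MS -> aff_indep_in S k.+1.
Proof.
move=> Sp Mf Sx hx.
pose p' : 'I_k.+2 -> vec := fun j => if (j < k.+1)%N then p (inord j) else x.
exists p'; split.
  by move=> l; rewrite /p'; case: ifP.
have p'0 : p' ord0 = p ord0.
  by rewrite /p' /=; congr p; apply: val_inj; rewrite /= inordK.
have ed : x - p ord0 = row ord_max (affM p').
  rewrite rowK p'0 /p'.
  by have -> : (lift ord0 (ord_max : 'I_k.+1) < k.+1)%N = false by rewrite lift0 ltnn.
have hd : (x - p ord0 <= affM p')%MS by rewrite ed; exact: row_sub.
have hM : (affM p <= affM p')%MS.
  apply/row_subP => i.
  have -> : row i (affM p) = row (widen_ord (leqnSn k) i) (affM p').
    rewrite !rowK p'0 /p'.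
    have -> : (lift ord0 (widen_ord (leqnSn k) i) < k.+1)%N by rewrite lift0 /= ltnS ltn_ord.
    congr (p _ - _); apply: val_inj; rewrite /= inordK // /bump leq0n add1n ltnS; exact: ltn_ord.
  exact: row_sub.
rewrite /row_free eqn_leq rank_leq_row /=.
have hlt : (affM p < (x - p ord0) + affM p)%MS.
  rewrite ltmxE addsmxSr /=; apply/negP => h.
  by move/negP: hx; apply; apply: submx_trans h; apply: addsmxSl.
have := rank_ltmx hlt; move: Mf; rewrite /row_free => /eqP ->.
move=> h1; apply: leq_trans h1 _; apply: mxrankS.
by rewrite addsmx_sub hd hM.
Qed.

Lemma LA1 (S : vset R n) P : (0 < n)%N -> P != 0 -> constS P S -> (exists s, S s) ->
  ~ aff_indep_in S n.-1 -> exists v, [/\ v != 0, wdot v P = 0 & constS v S].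
Proof.
move=> hn P0 HP [s Ss] nA.
have ex0 : exists k, `[< aff_indep_in S k >] by exists 0%N; apply/asboolP; apply: aff0 Ss.
have ub : forall k, `[< aff_indep_in S k >] -> (k <= n)%N.
  by move=> k /asboolP; apply: aff_le_n.
case: (ex_maxnP ex0 ub) => k /asboolP Hk kmax.
have kle : (k <= n)%N by apply: aff_le_n Hk.
case: Hk => p [Sp Mf].
have Hsub : forall x, S x -> (x - p ord0 <= affM p)%MS.
  move=> x Sx; apply/negPn/negP => hx.
  have := kmax k.+1 (asboolT (aff_ext Sp Mf Sx hx)).
  by rewrite ltnn.
have kn : (k.+1 < n)%N.
  case: (ltngtP k.+1 n) => // h.
    have kn : k = n by apply/eqP; rewrite eqn_leq kle.
    subst k; by case: (no_aff_n P0 HP); exists p.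
  have kn : k = n.-1 by rewrite -h.
  subst k; by case: nA; exists p.
pose N := col_mx P (affM p).
pose K := kermx N^T.
have rK : (0 < \rank K)%N.
  rewrite mxrank_ker mxrank_tr subn_gt0.
  by apply: leq_ltn_trans (rank_leq_row N) _; rewrite add1n.
have [i hi|none] := pickP (fun i => row i K != 0); last first.
  move: rK; rewrite lt0n mxrank_eq0 => /negP; case.
  apply/eqP/row_matrixP => i; rewrite row0.
  by move: (none i) => /negbFE /eqP.
pose v := row i K.
have vK : v *m N^T = 0 by apply/eqP; rewrite -sub_kermx row_sub.
move: vK; rewrite tr_col_mx mul_mx_row => /eqP; rewrite row_mx_eq0 => /andP [/eqP vP /eqP vM].
have cv : forall x, S x -> wdot v x = wdot v (p ord0).
  move=> x Sx; have /submxP [D eD] := Hsub x Sx.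
  have : wdot v (x - p ord0) = 0.
    by rewrite wdot_mx eD trmx_mul mulmxA vM mul0mx mxE.
  by rewrite wdotBr => /eqP; rewrite subr_eq0 => /eqP.
exists v; split=> //.
  by rewrite wdot_mx vP mxE.
by move=> x y Sx Sy; rewrite (cv x Sx) (cv y Sy).
Qed.

End LinAlg.

Section Vertex.
Variable R : realType.
Variable C : numClosedFieldType.
Variable n : nat.
Local Notation vec := ('rV[R]_n).
Local Notation pser := (pser C n).
Implicit Types (P Q v x y r : vec) (g : pser).

Lemma zero_of_empty P g : strictly_pos P -> ~ (exists x, Delta P g x) -> forall nu, g nu = 0.
Proof.
move=> HP H nu; case: (eqVneq (g nu) 0) => // hn.
by exfalso; apply: H; exact: Delta_nonempty HP hn.
Qed.

Lemma key_list P v (gs : seq pser) : strictly_pos P ->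
  (forall g, List.In g gs -> constS v (Delta P g)) ->
  exists2 e0, 0 < e0 & forall e, 0 < e -> e <= e0 ->
    strictly_pos (P + e *: v) /\ forall g, List.In g gs -> Delta (P + e *: v) g = Delta P g.
Proof.
move=> HP; elim: gs => [|g gs IH] H.
  have h2 : (0 : R) < 1/2 by lra.
  have [e0 e00 He0] := small_e v HP h2.
  exists e0 => // e e0' ee; split=> // j.
  have := He0 e e0' ee j; rewrite ler_norml mxE => /andP [h1 _].
  rewrite mxE; have := HP j; lra.
have [e1 e10 He1] := IH (fun g' hg' => H g' (or_intror hg')).
have Hg := H g (or_introl erefl).
case: (pselect (exists x0, Delta P g x0)) => [[x0 Dx0]|nD].
  have [e2 e20 He2] := key HP Dx0 (fun x Dx => Hg x x0 Dx Dx0).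
  exists (Num.min e1 e2); first by rewrite lt_min e10 e20.
  move=> e e0 ee; move: ee; rewrite le_min => /andP [ee1 ee2].
  have [sp Hall] := He1 e e0 ee1.
  split=> // g' [<-|hg']; last by apply: Hall.
  by apply: He2.
exists e1 => // e e0 ee; have [sp Hall] := He1 e e0 ee.
split=> // g' [<-|hg']; last by apply: Hall.
have g0 := zero_of_empty HP nD.
by apply: funext => x; apply: propext; split => h; exfalso; apply: (Delta0f g0 h).
Qed.

Lemma wdot_self_gt0 P : (0 < n)%N -> strictly_pos P -> 0 < wdot P P.
Proof.
move=> hn HP; pose j0 := Ordinal hn.
have h := wdot_term (x := P) j0 (fun j => ltW (HP j)) (fun j => ltW (HP j)).
by apply: lt_le_trans h; apply: mulr_gt0.
Qed.

Lemma not_ray P v e : (0 < n)%N -> strictly_pos P -> v != 0 -> wdot v P = 0 -> 0 < e ->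
  ~ (exists t, 0 < t /\ P + e *: v = t *: P).
Proof.
move=> hn HP v0 vP e0 [t [t0 ht]].
have pp := wdot_self_gt0 hn HP.
have : wdot (P + e *: v) P = wdot (t *: P) P by rewrite ht.
rewrite wdotDl !wdotZl vP mulr0 addr0 => h.
have t1 : t = 1.
  by apply/eqP; rewrite -subr_eq0; apply/eqP; apply: (mulIf (lt0r_neq0 pp)); rewrite mul0r mulrBl mul1r -h subrr.
have : e *: v = 0 by rewrite -(addKr P (e *: v)) ht t1 scale1r addNr.
by move/eqP; rewrite scaler_eq0 (gt_eqF e0) (negbTE v0).
Qed.

Definition sumset P g0 (gs : seq pser) : vset R n :=
  foldr (fun g S => msum S (Delta P g)) (Delta P g0) gs.

Lemma sumset_const P Q g0 gs :
  (forall g, List.In g (g0 :: gs) -> constS Q (Delta P g)) -> constS Q (sumset P g0 gs).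
Proof.
elim: gs => [|g gs IH] H /=; first by apply: H; left.
move=> x y [a [b [Sa [Db ->]]]] [a' [b' [Sa' [Db' ->]]]].
rewrite !wdotDr.
rewrite (IH _ a a') //; last first.
  by move=> g' [<-|hg']; apply: H; [left | right; right].
by rewrite (H g _ b b') //; right; left.
Qed.

Lemma sumset_diff P g0 gs s : sumset P g0 gs s ->
  forall g, List.In g (g0 :: gs) -> forall x y, Delta P g x -> Delta P g y ->
  exists s', sumset P g0 gs s' /\ sumset P g0 gs (s' + (x - y)).
Proof.
elim: gs s => [|g' gs IH] s /=.
  move=> Ss g [<-|[]] x y Dx Dy; exists y; split=> //.
  by rewrite addrC subrK.
move=> [a [b [Sa [Db _]]]] g Hg x y Dx Dy.
case: Hg => [e|[e|Hg]].
- have [s' [S1 S2]] := IH a Sa g (or_introl e) x y Dx Dy.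
  exists (s' + b); split; first by exists s', b.
  by exists (s' + (x - y)), b; split=> //; split=> //; rewrite addrAC.
- subst g'; exists (a + y); split; first by exists a, y.
  by exists a, x; split=> //; split=> //; rewrite -addrA [y + _]addrC subrK.
- have [s' [S1 S2]] := IH a Sa g (or_intror Hg) x y Dx Dy.
  exists (s' + b); split; first by exists s', b.
  by exists (s' + (x - y)), b; split=> //; split=> //; rewrite addrAC.
Qed.

Lemma sumset_ne P g0 gs s : sumset P g0 gs s ->
  forall g, List.In g (g0 :: gs) -> exists x, Delta P g x.
Proof.
elim: gs s => [|g' gs IH] s /=.
  by move=> Ss g [<-|[]]; exists s.
move=> [a [b [Sa [Db _]]]] g [e|[e|Hg]].
- by apply: (IH a Sa); left.
- by subst g'; exists b.
- by apply: (IH a Sa); right.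
Qed.

Lemma sumset_ex P g0 gs : (forall g, List.In g (g0 :: gs) -> exists x, Delta P g x) ->
  exists s, sumset P g0 gs s.
Proof.
elim: gs => [|g' gs IH] H /=; first by apply: H; left.
have [a Sa] := IH (fun g hg => H g (match hg with or_introl e => or_introl e | or_intror h => or_intror (or_intror h) end)).
have [b Db] := H g' (or_intror (or_introl erefl)).
by exists (a + b), a, b.
Qed.

Definition eqvL (gs : seq pser) (P Q : vec) : Prop :=
  forall g, List.In g gs -> Delta P g = Delta Q g.

Definition bad_class P (gs : seq pser) : Prop :=
  exists Q, [/\ weight Q, eqvL gs P Q & ~ (exists t, 0 < t /\ Q = t *: P)].

Lemma bad_of_v P v (gs : seq pser) : (0 < n)%N -> strictly_pos P -> v != 0 -> wdot v P = 0 ->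
  (forall g, List.In g gs -> constS v (Delta P g)) -> bad_class P gs.
Proof.
move=> hn HP v0 vP Hc.
have [e0 e00 He0] := key_list HP Hc.
have [sp Hall] := He0 e0 e00 (lexx _).
exists (P + e0 *: v); split.
- by move=> j; apply: ltW.
- by move=> g hg; rewrite Hall.
- exact: not_ray hn HP v0 vP e00.
Qed.

Lemma vertex_generic P g0 gs : (0 < n)%N -> strictly_pos P ->
  (~ (exists s, sumset P g0 gs s) -> bad_class P (g0 :: gs)) ->
  (is_vertex (eqvL (g0 :: gs)) P <-> has_dim (sumset P g0 gs) n.-1).
Proof.
move=> hn HP Hbad.
pose j0 := Ordinal hn.
have P0 : P != 0.
  apply/negP => /eqP eP; have := HP j0; rewrite eP mxE ltxx //.
have cP : constS P (sumset P g0 gs).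
  by apply: sumset_const => g _ x y Dx Dy; apply: Delta_const Dx Dy.
split.
  case=> _ Hray.
  have Hr : forall Q, weight Q -> eqvL (g0 :: gs) P Q -> exists t, 0 < t /\ Q = t *: P.
    move=> Q wQ eQ; have := f_equal (fun F => F Q) Hray => /= e.
    by rewrite -e.
  split; last first.
    by rewrite prednK //; apply: no_aff_n P0 cP.
  apply: contrapT => nA.
  case: (pselect (exists s, sumset P g0 gs s)) => [hS|nS]; last first.
    have [Q [wQ eQ nr]] := Hbad nS.
    by apply: nr; apply: Hr.
  have [v [v0 vP cv]] := LA1 hn P0 cP hS nA.
  have [s Ss] := hS.
  have [] // := @bad_of_v P v (g0 :: gs) hn HP v0 vP.
    move=> g hg x y Dx Dy.
    have [s' [S1 S2]] := sumset_diff Ss hg Dx Dy.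
    have := cv _ _ S2 S1; rewrite wdotDr => h.
    have : wdot v (x - y) = 0 by lra.
    by rewrite wdotBr => /eqP; rewrite subr_eq0 => /eqP.
  move=> Q [wQ eQ nr]; apply: nr; apply: Hr wQ eQ.
case=> Hai Hnai; split=> //.
apply: funext => Q; apply: propext; split.
  case=> wQ eQ.
  have cQ : constS Q (sumset P g0 gs).
    apply: sumset_const => g hg x y Dx Dy.
    by rewrite (eQ g hg) in Dx Dy; apply: Delta_const Dx Dy.
  have [t et] := ray_of_aff hn Hai P0 cP cQ.
  exists t; split=> //.
  have hS : exists s, sumset P g0 gs s by case: Hai => p [Sp _]; exists (p ord0).
  have [s Ss] := hS.
  have [x0 Dx0] := sumset_ne Ss (or_introl erefl).
  case: (ltrP 0 t) => // t0.
  have tz : t = 0.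
    apply/eqP; rewrite eq_le t0 /=.
    have := wQ j0; rewrite et mxE pmulr_lge0 //.
  have eQ0 := eQ g0 (or_introl erefl).
  rewrite et tz scale0r in eQ0.
  have E0 : Delta 0 g0 (x0 + E R j0).
    split; first by apply: newton_addr (proj1 Dx0) _ => j; rewrite mxE ler0n.
    by move=> y _; rewrite !wdot0l.
  rewrite -eQ0 in E0.
  have := Delta_const E0 Dx0; rewrite wdotDr wdotE => h.
  by have := HP j0; lra.
case=> t [t0 ->]; split; first by move=> j; rewrite mxE; apply: mulr_ge0; apply: ltW.
by move=> g _; rewrite Delta_scale.
Qed.

End Vertex.

Section Final.
Variable R : realType.
Variable C : numClosedFieldType.
Variable n : nat.
Local Notation vec := ('rV[R]_n).
Local Notation pser := (pser C n).
Implicit Types (P Q v x y r : vec) (g f : pser).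

Lemma pderiv_nz g i nu : (pderiv g i nu != 0) = (g (incr nu i) != 0).
Proof. by rewrite /pderiv mulf_eq0 pnatr_eq0 /=. Qed.

Lemma decr (nu : expo n) i : (0 < nu i)%N -> exists mu, incr mu i = nu.
Proof.
move=> h; exists [ffun j => (nu j - (j == i))%N]; apply/ffunP => j.
rewrite !ffunE; case: (eqVneq j i) => [->|_] /=; first by rewrite subnK.
by rewrite subn0 addn0.
Qed.

Lemma newton_shift f i x : newton (pderiv f i) x -> newton f (x + E R i).
Proof.
move=> nx; apply: conv_trans nx _ => p [nu [gnu hp]].
exists (incr nu i); split; first by rewrite -pderiv_nz.
move=> j; rewrite pt_incr [X in _ <= X]mxE [X in X <= _]mxE lerD2r.
exact: hp.
Qed.

Lemma deriv_face P f i : contains_var (face_fun P f) i ->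
  Delta P (pderiv f i) = fun x => newton (pderiv f i) x /\ Delta P f (x + E R i).
Proof.
case=> nu []; rewrite /face_fun; case: asboolP => [Dnu fnu|_] hi; last by rewrite eqxx in hi.
have [mu emu] := decr hi.
have dmu : pderiv f i mu != 0 by rewrite pderiv_nz emu.
have pmu : pt R mu + E R i = pt R nu by rewrite -pt_incr emu.
apply: funext => x; apply: propext; split.
  case=> nx hx; split=> //; split; first by apply: newton_shift.
  move=> y ny; rewrite wdotDr wdotE.
  have h1 := hx _ (@newton_ptE R _ _ _ _ dmu).
  have h2 := (proj2 Dnu) y ny.
  rewrite -pmu wdotDr wdotE in h2; lra.
case=> nx [_ hx]; split=> // y ny.
have := hx _ (newton_shift ny); rewrite !wdotDr wdotE; lra.
Qed.

Lemma face_eq P Q f : Delta P f = Delta Q f -> face_fun P f = face_fun Q f.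
Proof. by move=> H; rewrite /face_fun H. Qed.

Lemma face_zero_coord P g i x : strictly_pos P -> (forall nu, g nu != 0 -> nu i = 0%N) ->
  Delta P g x -> x 0 i = 0.
Proof.
move=> HP Hs [nx hx].
have G : forall p, gen g p -> wdot P x <= wdot P p /\ (0 < wdot (E R i) p -> wdot P x < wdot P p).
  move=> p gp; split; first by apply: hx; apply: newton_gen.
  case: gp => nu [gnu hp]; rewrite EwdotE => pi.
  have h1 := hx _ (@newton_ptE R _ _ _ _ gnu).
  have h2 : P 0 i * (p - pt R nu) 0 i <= wdot P (p - pt R nu).
    apply: wdot_term => j; first by apply: ltW.
    by rewrite !mxE subr_ge0; have := hp j; rewrite mxE.
  move: h2; rewrite wdotBr [(p - _) 0 i]mxE [X in _ + X]mxE [(pt R nu) 0 i]mxE (Hs _ gnu) subr0 => h2.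
  have : 0 < P 0 i * p 0 i by apply: mulr_gt0.
  lra.
have [_ h] := conv_lin nx G.
apply/eqP; rewrite eq_le (newton_ge0 i nx) andbT leNgt; apply/negP => hxi.
by have := h; rewrite EwdotE => /(_ hxi); rewrite ltxx.
Qed.

Lemma in_In (T : eqType) (x : T) (s : seq T) : x \in s -> List.In x s.
Proof.
elim: s => [|a s IH] //; rewrite inE => /orP [/eqP ->|h]; [by left | by right; apply: IH].
Qed.

Lemma is_vertex_iff (e1 e2 : vec -> vec -> Prop) P :
  (forall Q, e1 P Q <-> e2 P Q) -> (is_vertex e1 P <-> is_vertex e2 P).
Proof.
move=> H; rewrite /is_vertex.
have -> : (fun Q => weight Q /\ e1 P Q) = (fun Q => weight Q /\ e2 P Q).
  by apply: funext => Q; apply: propext; split; case=> a b; split=> //; apply/H.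
by [].
Qed.

Lemma bad_zero P (gs : seq pser) : (0 < n)%N -> strictly_pos P ->
  (forall g, List.In g gs -> forall nu, g nu = 0) -> bad_class P gs.
Proof.
move=> hn HP H; exists 0; split.
- by move=> j; rewrite mxE.
- move=> g hg; apply: funext => x; apply: propext.
  by split=> h; exfalso; apply: (Delta0f (H g hg) h).
- case=> t [t0 /(f_equal (fun M : vec => M 0 (Ordinal hn)))]; rewrite !mxE => h.
  by have := HP (Ordinal hn); have := mulr_gt0 t0 (HP (Ordinal hn)); rewrite -h ltxx.
Qed.

Lemma jac_bad P f : (0 < n)%N -> strictly_pos P -> f (zero_expo n) = 0 ->
  ~ (exists s, sumset P f (map (pderiv f) (enum 'I_n)) s) ->
  bad_class P (f :: map (pderiv f) (enum 'I_n)).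
Proof.
move=> hn HP f0 nS.
have inmap : forall g, List.In g (map (pderiv f) (enum 'I_n)) -> exists i, g = pderiv f i.
  by move=> g /List.in_map_iff [i [<- _]]; exists i.
case: (pselect (exists nu, f nu != 0)) => [[nu0 fnu0]|nf]; last first.
  have fz : forall nu, f nu = 0.
    by move=> nu; apply/eqP; apply: contrapT => h; apply: nf; exists nu; apply/negP.
  apply: bad_zero => // g [<-|hg] nu //.
  by have [i ->] := inmap g hg; rewrite /pderiv fz mulr0.
case: (pselect (exists i, forall nu, pderiv f i nu = 0)) => [[i hi]|ni]; last first.
  exfalso; apply: nS; apply: sumset_ex => g [<-|hg].
    exact: Delta_nonempty HP fnu0.
  case: (pselect (exists nu, g nu != 0)) => [[nu gnu]|ng].
    exact: Delta_nonempty HP gnu.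
  have [i ei] := inmap g hg.
  exfalso; apply: ni; exists i => nu; rewrite -ei.
  by apply/eqP; apply: contrapT => h; apply: ng; exists nu; apply/negP.
have fi : forall nu, f nu != 0 -> nu i = 0%N.
  move=> nu fnu; case: (posnP (nu i)) => // hpos.
  have [mu emu] := decr hpos.
  by move: fnu; rewrite -emu -pderiv_nz hi eqxx.
have [j hj] : exists j, nu0 j != 0%N.
  case: (pickP (fun j => nu0 j != 0%N)) => [j hj|none]; first by exists j.
  have : nu0 = zero_expo n.
    by apply/ffunP => j; rewrite ffunE; move: (none j) => /negbFE /eqP.
  by move=> e; move: fnu0; rewrite e f0 eqxx.
have ji : j != i by apply/eqP => e; move: hj; rewrite e fi // eqxx.
pose c := P 0 i / wdot P P.
have pp := wdot_self_gt0 hn HP.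
have c0 : 0 < c by apply: divr_gt0.
pose v := E R i - c *: P.
apply: (@bad_of_v R C n P v) => //.
- apply/negP => /eqP /(f_equal (fun M : vec => M 0 j)); rewrite !mxE (negbTE ji) sub0r.
  move/eqP; rewrite oppr_eq0 mulf_eq0 (gt_eqF c0) (gt_eqF (HP j)) //.
- rewrite /v wdotC wdotBr wdotZr wdotE /c mulfVK ?subrr //.
  by rewrite gt_eqF.
- have supp : forall g, List.In g (f :: map (pderiv f) (enum 'I_n)) ->
      forall nu, g nu != 0 -> nu i = 0%N.
    move=> g [<-|hg] //.
    have [k ->] := inmap g hg => nu; rewrite pderiv_nz => h.
    by have := fi _ h; rewrite ffunE => /eqP; rewrite addn_eq0 => /andP [/eqP].
  move=> g hg x y Dx Dy.
  rewrite /v -scaleNr !wdotDl !wdotZl !EwdotE.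
  rewrite (face_zero_coord HP (supp g hg) Dx) (face_zero_coord HP (supp g hg) Dy).
  by rewrite (Delta_const Dx Dy).
Qed.

End Final.

Theorem proposition7 (R : realType) (C : numClosedFieldType) (n : nat)
    (f : pser C n) :
  (0 < n)%N -> convergent f -> f (zero_expo n) = 0 ->
  (* (1) *)
  (forall P Q : 'rV[R]_n, weight P -> weight Q ->
     jequiv f P Q -> wequiv f P Q) /\
  (forall P Q : 'rV[R]_n, weight P -> weight Q -> wequiv f P Q ->
     (forall i, contains_var (face_fun P f) i) -> jequiv f P Q) /\
  (* (2) *)
  (forall P : 'rV[R]_n, strictly_pos P ->
     (is_vertex (wequiv f) P <-> has_dim (Delta P f) n.-1) /\
     (is_vertex (jequiv f) P <-> has_dim (jac_face_sum P f) n.-1)).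
Proof.
move=> hn _ f0.
split; first by move=> P Q _ _ [].
split.
  move=> P Q _ _ H Hc; split=> // i.
  have Hc' : contains_var (face_fun Q f) i by rewrite -(face_eq H).
  by rewrite (deriv_face (Hc i)) (deriv_face Hc') H.
move=> P HP; split.
  have hv : forall Q, wequiv f P Q <-> eqvL [:: f] P Q.
    move=> Q; split.
      by move=> H g [<-|[]].
    by move=> H; apply: H; left.
  apply: iff_trans (is_vertex_iff hv) _.
  apply: (@vertex_generic R C n P f [::]) => // nS.
  apply: bad_zero => // g [<-|[]].
  apply: zero_of_empty HP _ => -[x Dx]; apply: nS; exists x; exact: Dx.
have hv : forall Q, jequiv f P Q <-> eqvL (f :: map (pderiv f) (enum 'I_n)) P Q.
  move=> Q; split.
    case=> H0 Hi g [<-|hg] //.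
    by case/List.in_map_iff: hg => i [<- _]; apply: Hi.
  move=> H; split; first by apply: H; left.
  move=> i; apply: H; right; apply: List.in_map; apply: in_In; by rewrite mem_enum.
apply: iff_trans (is_vertex_iff hv) _.
have -> : jac_face_sum P f = sumset P f (map (pderiv f) (enum 'I_n)) by rewrite /sumset foldr_map.
exact: vertex_generic hn HP (jac_bad hn HP f0).
Qed.
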